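(* Let $\Delta$ be a quasi-forest on $[n]$ with $s+1$ facets, of dimension $d-1$, with $f$-vector $(f_0,\ldots,f_{d-1})$, and put $f_{-1}=1$. Let $F_{s+1}, F_s, \ldots, F_1$ be a leaf order of $\Delta$ (so that for each $1\le j\le s$, $F_j$ is a leaf of $\langle F_{s+1},F_s,\ldots,F_j\rangle$). For each $1\le j\le s$ let $G_j$ be a branch of the leaf $F_j$ in $\langle F_{s+1},F_s,\ldots,F_j\rangle$. Let $\delta_j=|F_j|$ for $1\le j\le s+1$ and $e_j=|F_j\cap G_j|$ for $1\le j\le s$. Then: (a) $\sum_{i=0}^{d} f_{i-1}x^i = \sum_{j=1}^{s+1}(1+x)^{\delta_j} - \sum_{j=1}^{s}(1+x)^{e_j}$; (b) if $k_1\cdots k_{s+1}$ is a permutation of $[s+1]$ with $0<\delta_{k_1}\le\cdots\le\delta_{k_s}\le\delta_{k_{s+1}}=d$ and $\ell_1\cdots\ell_s$ is a permutation of $[s]$ with $0\le e_{\ell_1}\le\cdots\le e_{\ell_s}$, then $e_{\ell_j}<\delta_{k_j}$ for all $1\le j\le s$.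
   Context: A simplicial complex $\Delta$ on $[n]$ is a collection of subsets of $[n]$ containing all singletons and closed under taking subsets; $\dim\Delta=d-1$ where $d$ is the maximal face size; facets are maximal faces; $f_i$ is the number of faces with $i+1$ elements. For facets $F_{i_1},\ldots,F_{i_q}$, $\langle F_{i_1},\ldots,F_{i_q}\rangle$ is the subcomplex of all faces contained in some $F_{i_j}$. A facet $F$ of a complex is a leaf if there is another facet $G\neq F$ (a branch of $F$) with $H\cap F\subset G\cap F$ for all facets $H\neq F$. A quasi-forest is a simplicial complex whose facets admit an ordering (a leaf order) $H_1,\ldots,H_m$ such that for each $1<j\le m$, $H_j$ is a leaf of $\langle H_1,\ldots,H_j\rangle$. *)

(* Defs.v *)
From mathcomp Require Import all_boot all_order all_algebra.
Set Implicit Arguments. Unset Strict Implicit. Unset Printing Implicit Defensive.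
Import GRing.Theory.

Section Defs.
Variable n : nat.
Notation V := ('I_n).

Definition is_simplicial_complex (D : {set {set V}}) : Prop :=
  (forall v : V, [set v] \in D) /\
  (forall A B : {set V}, B \in D -> A \subset B -> A \in D).

Definition facets (D : {set {set V}}) : {set {set V}} :=
  [set F in D | [forall B in D, (F \subset B) ==> (B == F)]].

(* d = maximal face size, so dim D = d - 1 *)
Definition maxface (D : {set {set V}}) : nat := \max_(F in D) #|F|.

(* f_i = number of faces with i+1 elements; fm1 D i = f_{i-1}, with f_{-1}=1 *)
Definition fvec (D : {set {set V}}) (i : nat) : nat :=
  #|[set A in D | #|A| == i.+1]|.
Definition fm1 (D : {set {set V}}) (i : nat) : nat :=
  if i is j.+1 then fvec D j else 1.

Definition gen (S : {set {set V}}) : {set {set V}} :=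
  [set A : {set V} | [exists B in S, A \subset B]].

Definition is_branch (C : {set {set V}}) (F G : {set V}) : Prop :=
  [/\ F \in facets C, G \in facets C, G != F &
      forall H, H \in facets C -> H != F -> H :&: F \subset G :&: F].

Definition is_leaf (C : {set {set V}}) (F : {set V}) : Prop :=
  exists G, is_branch C F G.

Definition is_quasi_forest (D : {set {set V}}) : Prop :=
  is_simplicial_complex D /\
  exists Hs : seq {set V},
    [/\ uniq Hs, (forall H, (H \in Hs) = (H \in facets D)) &
        forall j, 1 < j <= size Hs ->
          is_leaf (gen [set H in take j Hs]) (nth set0 Hs j.-1)].
End Defs.

(* Main.v *)
Require Import Defs.
From mathcomp Require Import all_boot all_order all_algebra zify.
Import GRing.Theory.
Set Implicit Arguments. Unset Strict Implicit. Unset Printing Implicit Defensive.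

Section H.
Variable n : nat.
Notation V := ('I_n).

Lemma facetP (D : {set {set V}}) (F : {set V}) :
  reflect (F \in D /\ forall B, B \in D -> F \subset B -> B = F) (F \in facets D).
Proof.
rewrite inE; apply: (iffP andP) => [[FD /forallP H]|[FD H]]; split => //.
  by move=> B BD FB; move: (H B); rewrite BD FB /= => /eqP.
by apply/forallP => B; apply/implyP => BD; apply/implyP => FB; rewrite (H B BD FB).
Qed.

Lemma genP (S : {set {set V}}) (A : {set V}) :
  reflect (exists2 B, B \in S & A \subset B) (A \in gen S).
Proof.
rewrite inE; apply: (iffP existsP) => [[B /andP[]]|[B BS AB]]; first by exists B.
by exists B; rewrite BS.
Qed.

Lemma facets_gen_sub (S : {set {set V}}) (G : {set V}) : G \in facets (gen S) -> G \in S.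
Proof.
case/facetP => /genP[B BS GB] H.
have BG : B \in gen S by apply/genP; exists B.
by rewrite -(H B BG GB).
Qed.

Lemma gen1 (B : {set V}) : gen [set B] = powerset B.
Proof.
apply/setP => A; rewrite powersetE; apply/genP/idP => [[B']|AB].
  by rewrite inE => /eqP ->.
by exists B; rewrite ?inE.
Qed.

Lemma genU (S1 S2 : {set {set V}}) : gen (S1 :|: S2) = gen S1 :|: gen S2.
Proof.
apply/setP => A; rewrite in_setU; apply/genP/orP.
  by case=> B; rewrite inE => /orP[] BS AB; [left|right]; apply/genP; exists B.
by case=> /genP[B BS AB]; exists B; rewrite // inE BS ?orbT.
Qed.

Local Open Scope ring_scope.

Lemma sum_size (Fam : {set {set V}}) N :
  (forall A, A \in Fam -> (#|A| <= N)%N) ->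
  \sum_(A in Fam) 'X^#|A| =
  \sum_(i < N.+1) (#|[set A in Fam | #|A| == i]|)%:R *: ('X^i : {poly int}).
Proof.
move=> HN.
have E : forall A, A \in Fam -> 'X^#|A| =
   \sum_(i < N.+1) ((#|A| == i)%:R : int) *: ('X^i : {poly int}).
  move=> A AF.
  rewrite (bigD1 (Ordinal (leq_ltn_trans (HN A AF) (ltnSn N)))) //= eqxx scale1r.
  rewrite big1 ?addr0 // => i /eqP Hi.
  have -> : (#|A| == i) = false.
    by apply/negP => /eqP Ei; apply: Hi; apply: val_inj; rewrite /= Ei.
  by rewrite scale0r.
rewrite (eq_bigr _ E) exchange_big /=; apply: eq_bigr => i _.
rewrite -scaler_suml; congr (_ *: _).
rewrite -natr_sum; congr (_%:R).
rewrite -sum1_card [RHS]big_mkcond [LHS]big_mkcond /=.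
by apply: eq_bigr => A _; rewrite !inE; case: (A \in Fam); case: (#|A| == i).
Qed.

Lemma sum_powerset (B : {set V}) :
  \sum_(A in powerset B) 'X^#|A| = ('X + 1) ^+ #|B| :> {poly int}.
Proof.
rewrite (sum_size (N := #|B|)); last by move=> A; rewrite powersetE => /subset_leq_card.
rewrite exprD1n; apply: eq_bigr => i _; rewrite -scaler_nat; congr (_ *: _).
rewrite -cards_draws; congr (_%:R); apply: eq_card => A; by rewrite !inE ?powersetE.
Qed.
End H.

Lemma sum_setU (T : finType) (X Y : {set T}) (f : T -> {poly int}) :
  (\sum_(A in X :|: Y) f A = \sum_(A in X) f A + \sum_(A in Y) f A - \sum_(A in Y :&: X) f A)%R.
Proof.
rewrite (big_setID X) (big_setID (A := Y) X) /=.
have -> : (X :|: Y) :&: X = X by apply/setP => x; rewrite !inE; case: (x \in X); case: (x \in Y).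
have -> : (X :|: Y) :\: X = Y :\: X by apply/setP => x; rewrite !inE; case: (x \in X); case: (x \in Y).
set a := (\sum_(_ in X) _)%R; set b := (\sum_(_ in Y :&: X) _)%R; set c := (\sum_(_ in Y :\: X) _)%R.
by rewrite (addrC b) addrA addrK.
Qed.

Lemma mono_le (f : nat -> nat) lo hi : (forall i, lo <= i < hi -> f i <= f i.+1) ->
  forall a b, lo <= a -> a <= b -> b <= hi -> f a <= f b.
Proof.
move=> H a b la; elim: b => [|b IH] ab bh.
  by move: ab; rewrite leqn0 => /eqP ->.
move: ab; rewrite leq_eqVlt => /orP[/eqP -> //|ab].
apply: leq_trans (IH ab (ltnW bh)) (H b _); lia.
Qed.

Local Open Scope ring_scope.

Theorem lemma2p1 (n s d : nat) (D : {set {set 'I_n}})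
    (F G : nat -> {set 'I_n}) :
  is_quasi_forest D ->
  d = maxface D ->
  {in [pred j : nat | (1 <= j <= s.+1)%N]&, injective F} ->
  (forall H, H \in facets D <-> exists2 j, (1 <= j <= s.+1)%N & H = F j) ->
  (forall j, (1 <= j <= s)%N ->
     is_branch (gen [set H : {set 'I_n} | [exists i : 'I_(s.+2), (j <= i)%N && (H == F i)]]) (F j) (G j)) ->
  let delta := fun j => #|F j| in
  let e := fun j => #|F j :&: G j| in
  (\sum_(i < d.+1) (fm1 D i)%:R *: 'X^i : {poly int})
     = \sum_(1 <= j < s.+2) ('X + 1) ^+ delta j
       - \sum_(1 <= j < s.+1) ('X + 1) ^+ e j
  /\
  (forall k l : nat -> nat,
     {in [pred j : nat | (1 <= j <= s.+1)%N]&, injective k} ->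
     (forall j, (1 <= j <= s.+1)%N -> (1 <= k j <= s.+1)%N) ->
     {in [pred j : nat | (1 <= j <= s)%N]&, injective l} ->
     (forall j, (1 <= j <= s)%N -> (1 <= l j <= s)%N) ->
     (0 < delta (k 1%N))%N ->
     (forall j, (1 <= j <= s)%N -> (delta (k j) <= delta (k j.+1))%N) ->
     delta (k s.+1) = d ->
     (forall j, (1 <= j < s)%N -> (e (l j) <= e (l j.+1))%N) ->
     forall j, (1 <= j <= s)%N -> (e (l j) < delta (k j))%N).
Proof.
move=> [[Hsing Hclos] _] dD Finj Ffac Gbr delta e.
pose S j := [set H : {set 'I_n} | [exists i : 'I_(s.+2), (j <= i)%N && (H == F i)]].
have inS : forall j H, H \in S j <-> exists2 i, (j <= i <= s.+1)%N & H = F i.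
  move=> j H; rewrite inE; split.
    by case/existsP => i /andP[ji /eqP ->]; exists i => //; rewrite ji -ltnS ltn_ord.
  case=> i /andP[ji his] ->; apply/existsP; exists (Ordinal (his : (i < s.+2)%N)).
  by rewrite ji eqxx.
have facD : forall i, (1 <= i <= s.+1)%N -> F i \in facets D.
  by move=> i hi; apply/Ffac; exists i.
have FD : forall i, (1 <= i <= s.+1)%N -> F i \in D.
  by move=> i /facD /facetP[].
have Gbr' : forall j, (1 <= j <= s)%N -> is_branch (gen (S j)) (F j) (G j) := Gbr.
have facG : forall j, (1 <= j <= s)%N -> exists2 m, (j < m <= s.+1)%N & G j = F m.
  move=> j hj; case: (Gbr' j hj) => _ /facets_gen_sub /inS[m /andP[jm ms] GF] GnF _.
  exists m => //; rewrite ms andbT ltn_neqAle jm andbT.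
  by apply/eqP => E; move: GnF; rewrite GF E eqxx.
have eF : forall j, (1 <= j <= s)%N -> (e j < delta j)%N.
  move=> j hj; case: (Gbr' j hj) => /facetP[FC FM] /facetP[GC GM] GnF _.
  apply: proper_card; rewrite properE subsetIl /= subsetI subxx /=.
  by apply/negP => FG; move: GnF; rewrite (FM _ GC FG) eqxx.
have eG : forall j, (1 <= j <= s)%N -> (e j < #|G j|)%N.
  move=> j hj; case: (Gbr' j hj) => /facetP[FC FM] /facetP[GC GM] GnF _.
  apply: proper_card; rewrite properE subsetIr /= subsetI subxx andbT /=.
  by apply/negP => GF; move: GnF; rewrite (GM _ FC GF) eqxx.
split.
  have SjU : forall j, (j <= s)%N -> S j = F j |: S j.+1.
    move=> j hj; apply/setP => H; rewrite in_setU1; apply/idP/orP.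
      case/inS => i /andP[ji is1] ->.
      move: ji; rewrite leq_eqVlt => /orP[/eqP ->|ji]; first by left.
      by right; apply/inS; exists i => //; rewrite ji.
    case=> [/eqP ->|/inS[i /andP[ji is1] ->]]; apply/inS.
      by exists j => //; rewrite leqnn /= ltnW.
    by exists i => //; rewrite ltnW.
  have Slast : S s.+1 = [set F s.+1].
    apply/setP => H; rewrite inE; apply/idP/eqP.
      by case/inS => i /andP[ji is1] ->; have -> : i = s.+1 by lia.
    by move=> ->; apply/inS; exists s.+1 => //; rewrite leqnn.
  have key : forall j, (1 <= j <= s)%N ->
      gen (S j.+1) :&: powerset (F j) = powerset (F j :&: G j).
    move=> j hj; case: (Gbr' j hj) => Ffc Gfc GnF br.
    apply/setP => A; rewrite in_setI !powersetE subsetI; apply/andP/andP.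
      case=> /genP[B /inS[i /andP[ji is1] ->] AFi] AFj; split => //.
      have Fifc : F i \in facets (gen (S j)).
        apply/facetP; split.
          by apply/genP; exists (F i) => //; apply/inS; exists i => //; rewrite ltnW.
        move=> B' /genP[B'' /inS[i' /andP[ji' is1'] ->] B'Fi'] FiB'.
        have Ei' : F i' = F i.
          case/facetP: (facD i ltac:(lia)) => _ Hmax.
          apply: Hmax; first by apply: FD; lia.
          exact: subset_trans FiB' B'Fi'.
        by apply/eqP; rewrite eqEsubset FiB' andbT -Ei'.
      have FinF : F i != F j.
        by apply/eqP => E; have := Finj i j ltac:(rewrite inE /=; lia) ltac:(rewrite inE /=; lia) E; lia.
      have := br _ Fifc FinF => /subsetP sub.
      apply/subsetP => x xA.
      have : x \in F i :&: F j by rewrite inE (subsetP AFi) // (subsetP AFj).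
      by move/sub; rewrite inE => /andP[].
    case=> AFj AGj; split => //.
    case: (facG j hj) => m hm Gm.
    apply/genP; exists (G j) => //; apply/inS; exists m; first by lia.
    by [].
  have Psum : forall m j, (j + m = s.+1)%N -> (1 <= j)%N ->
      \sum_(A in gen (S j)) 'X^#|A| =
      \sum_(j <= i < s.+2) ('X + 1) ^+ delta i - \sum_(j <= i < s.+1) ('X + 1) ^+ e i :> {poly int}.
    elim=> [|m IH] j hjm hj.
      rewrite addn0 in hjm; rewrite hjm Slast gen1 sum_powerset.
      by rewrite big_ltn // !big_geq // addr0 subr0.
    have hjs : (j <= s)%N by lia.
    rewrite SjU // genU gen1 sum_setU key; last by lia.
    rewrite IH; [|lia|lia].
    rewrite !sum_powerset (big_ltn (m := j) (n := s.+2)) ?(big_ltn (m := j) (n := s.+1)); try lia.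
    rewrite /delta /e.
    set a := ('X + 1) ^+ #|F j|; set b := ('X + 1) ^+ #|F j :&: G j|.
    set c := \sum_(j.+1 <= i < s.+2) _; set c' := \sum_(j.+1 <= i < s.+1) _.
    by rewrite opprD !addrA addrAC [RHS]addrAC [a + c - c']addrAC.
  have DS : D = gen (S 1).
    apply/setP => A; apply/idP/idP.
      move=> AD.
      pose P := [set B in D | A \subset B].
      have AP : A \in P by rewrite inE AD subxx.
      case: (arg_maxnP (fun B : {set 'I_n} => #|B|) AP) => B.
      move=> PB Bmax; have : B \in P := PB; rewrite inE => /andP[BD AB].
      have Bfac : B \in facets D.
        apply/facetP; split => // B' B'D BB'.
        apply/eqP; rewrite eq_sym eqEcard BB' /=.
        by apply: Bmax; have : B' \in P by rewrite inE B'D (subset_trans AB BB').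
      case/Ffac: Bfac => i hi EB.
      by apply/genP; exists B => //; apply/inS; exists i.
    case/genP => B /inS[i hi ->] AFi.
    by apply: Hclos AFi; apply: FD.
  transitivity (\sum_(A in D) 'X^#|A| : {poly int}); last first.
    by rewrite DS (Psum s 1%N) // add1n.
  rewrite (sum_size (N := d)); last first.
    move=> A AD; rewrite dD /maxface; exact: leq_bigmax_cond.
  apply: eq_bigr => i _; congr (_%:R *: _).
  case: i => [[|i] hi] //=.
  have s0 : set0 \in D by apply: (Hclos _ (F 1%N)); [apply: FD | apply: sub0set].
  rewrite -(cards1 (set0 : {set 'I_n})); apply: eq_card => A; rewrite !inE cards_eq0.
  by case: (A =P set0) => [->|]; rewrite ?s0 ?andbF ?andbT ?eqxx //.
move=> k l kinj kr linj lr _ kmono _ lmono j hj.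
rewrite ltnNge; apply/negP => H.
set t := delta (k j).
pose Jseq := [seq i <- iota 1 s | (t <= e i)%N].
pose Aseq := [seq i <- iota 1 s.+1 | (t < delta i)%N].
have inJ : forall i, (i \in Jseq) = ((1 <= i <= s) && (t <= e i))%N.
  by move=> i; rewrite mem_filter mem_iota andbC; congr (_ && _); lia.
have inA : forall i, (i \in Aseq) = ((1 <= i <= s.+1) && (t < delta i))%N.
  by move=> i; rewrite mem_filter mem_iota andbC; congr (_ && _); lia.
have h1 : (s - j + 1 <= size Jseq)%N.
  have -> : (s - j + 1 = size (map l (iota j (s - j + 1))))%N by rewrite size_map size_iota.
  apply: uniq_leq_size.
    rewrite map_inj_in_uniq ?iota_uniq // => x y; rewrite !mem_iota => hx hy.
    by apply: linj; rewrite inE /=; lia.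
  move=> y /mapP[x]; rewrite mem_iota => hx ->.
  rewrite inJ lr /=; last by lia.
  apply: leq_trans H _.
  apply: (mono_le (f := fun i => e (l i)) (lo := 1) (hi := s)); try lia.
  by move=> i hi; apply: lmono.
have h2 : (size Jseq + 1 <= size Aseq)%N.
  pose P := fun i => ((1 <= i <= s) && (t <= e i))%N.
  have exP : exists i, P i by exists (l j); rewrite /P lr.
  have ubP : forall i, P i -> (i <= s)%N by move=> i /andP[/andP[]].
  case: (ex_maxnP exP ubP) => jm /andP[hjm tjm] jmax.
  case: (facG jm hjm) => m hm Gm.
  have -> : (size Jseq + 1 = size (m :: Jseq))%N by rewrite /= addn1.
  apply: uniq_leq_size.
    rewrite /= filter_uniq ?iota_uniq // andbT inJ; apply/negP => Pm.
    by have := jmax m Pm; lia.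
  move=> x; rewrite inE => /orP[/eqP ->|].
    rewrite inA; apply/andP; split; first by lia.
    by rewrite /delta -Gm; apply: leq_ltn_trans tjm (eG _ hjm).
  rewrite inJ inA => /andP[hx tx]; apply/andP; split; first by lia.
  by apply: leq_ltn_trans tx (eF _ hx).
have h3 : (size Aseq + j <= s.+1)%N.
  have -> : (size Aseq + j = size (Aseq ++ map k (iota 1 j)))%N by rewrite size_cat size_map size_iota.
  rewrite -[s.+1](size_iota 1); apply: uniq_leq_size.
    rewrite cat_uniq filter_uniq ?iota_uniq //=; apply/andP; split.
      apply/hasPn => y /mapP[x]; rewrite mem_iota => hx ->.
      rewrite inA negb_and -leqNgt; apply/orP; right.
      apply: (mono_le (f := fun i => delta (k i)) (lo := 1) (hi := s.+1)); try lia.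
      by move=> i hi; apply: kmono; lia.
    rewrite map_inj_in_uniq ?iota_uniq // => x y; rewrite !mem_iota => hx hy.
    by apply: kinj; rewrite inE /=; lia.
  move=> y; rewrite mem_cat => /orP[|/mapP[x]].
    by rewrite inA mem_iota => /andP[hy _]; lia.
  rewrite mem_iota => hx ->; rewrite mem_iota; have := kr x; lia.
lia.
Qed.
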